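(* Let $n\ge 6$ be even, and let $d_*=(\epsilon_1,\dots,\epsilon_{n-1},h)$ and $d_*'=(\epsilon_1',\dots,\epsilon_{n-1}',h')$ be neighbors with $d_*\ne d_*'$. Then for all $j_1,j_2$ with $1\le j_1\le j_2\le n-1$, \[\left|\sum_{j=j_1}^{j_2}(\epsilon'_j-\epsilon_j)\right|\le 2.\] Further, $|h-h'|\le 2$, or $|h|=\frac n2-1$ and $h'=-h$.
   Context: Symbols are $[1,n]$; $\mathrm{dist}(a,b)$ is the minimum of the residues of $a-b$ and $b-a$ mod $n$ (in $[0,n-1]$). A Latin row is a permutation $(s_1,\dots,s_n)$ of $[1,n]$. Its extended difference row is $(\epsilon_1,\dots,\epsilon_{n-1},h)$ where, with $h_j\in[0,n-1]$, $h_j\equiv s_{j+1}-s_j\pmod n$ ($1\le j\le n-1$), $h_n\equiv s_1-s_n\pmod n$, one sets $\epsilon_j=h_j-\frac n2$, $h=h_n-\frac n2$ (integers). A Latin rectangle is a matrix over $[1,n]$ with no repeats in any row or column; its inner distance is the minimum of $\mathrm{dist}$ over symbols in horizontally or vertically adjacent cells. Two extended difference rows of Latin rows of inner distance $\frac n2-1$ (inner distance of a row being $\min_j\mathrm{dist}(s_j,s_{j+1})$) are neighbors if there exist Latin rows $r,r'$ with these extended difference rows such that the $2\times n$ matrix with rows $r$ and $r'$ is a Latin rectangle of inner distance $\frac n2-1$. *)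

(* Defs.v *)
From mathcomp Require Import all_boot all_order all_algebra.
Set Implicit Arguments. Unset Strict Implicit. Unset Printing Implicit Defensive.
Import Order.TTheory GRing.Theory Num.Theory.
Local Open Scope ring_scope.

(* Symbols are natural numbers in [1,n]; a row is a seq nat, s_j = nth 0 s (j-1). *)

Definition resid (n : nat) (a b : nat) : int := ((a%:Z - b%:Z) %% n%:Z)%Z.

Definition dist (n a b : nat) : nat := minn `|resid n a b|%N `|resid n b a|%N.

Definition latin_row (n : nat) (s : seq nat) : Prop := perm_eq s (iota 1 n).

Definition row_inner_dist (n : nat) (s : seq nat) : nat :=
  \big[minn/n]_(j < n.-1) dist n (nth 0%N s j) (nth 0%N s j.+1).

(* extended difference row (eps_1,...,eps_{n-1},h), as a seq int of length n:
   entry j (0-based) is h_{j+1} - n/2 with h_{j+1} = (s_{j+2} - s_{j+1}) mod n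
   for j < n-1, and h_n = (s_1 - s_n) mod n. *)
Definition ext_diff (n : nat) (s : seq nat) : seq int :=
  [seq resid n (nth 0%N s (j.+1 %% n)) (nth 0%N s j) - (n./2)%:Z | j <- iota 0 n].

Definition latin_rect2 (n : nat) (r r' : seq nat) : Prop :=
  latin_row n r /\ latin_row n r' /\
  (forall j, (j < n)%N -> nth 0%N r j != nth 0%N r' j).

Definition rect2_inner_dist (n : nat) (r r' : seq nat) : nat :=
  minn (minn (row_inner_dist n r) (row_inner_dist n r'))
       (\big[minn/n]_(j < n) dist n (nth 0%N r j) (nth 0%N r' j)).

Definition good_ext_row (n : nat) (d : seq int) : Prop :=
  exists s, latin_row n s /\ row_inner_dist n s = (n./2 - 1)%N /\ ext_diff n s = d.

Definition neighbors (n : nat) (d d' : seq int) : Prop :=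
  good_ext_row n d /\ good_ext_row n d' /\
  exists r r', ext_diff n r = d /\ ext_diff n r' = d' /\
    latin_rect2 n r r' /\ rect2_inner_dist n r r' = (n./2 - 1)%N.

(* Main.v *)
Require Import Defs.
From mathcomp Require Import all_boot all_order all_algebra zify.
Import Order.TTheory GRing.Theory Num.Theory.
Local Open Scope ring_scope.
Lemma Kn (K n : int) : 0 < n -> (K <= -1 /\ K * n <= - n) \/ (K = 0 /\ K * n = 0) \/ (K = 1 /\ K * n = n) \/ (2 <= K /\ 2 * n <= K * n).
Proof.
move=> hn.
have [h|[h|[h|h]]] : K <= -1 \/ K = 0 \/ K = 1 \/ 2 <= K by lia.
- left; split=> //; have := ler_pM (_ : 0 <= 1) (ltW hn) (_ : 1 <= - K) (lexx n). rewrite mul1r mulNr; lia.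
- by right; left; rewrite h mul0r.
- by right; right; left; rewrite h mul1r.
- right; right; right; split=> //; exact: ler_pM (_ : 0 <= 2) (ltW hn) h (lexx n).
Qed.

Lemma lemA (n m a b : int) : n = 2 * m -> 3 <= m ->
  m - 1 <= `|((a - b) %% n)%Z| -> m - 1 <= `|((b - a) %% n)%Z| ->
  m - 1 <= ((b - a) %% n)%Z <= m + 1.
Proof.
move=> hn hm h1 h2.
have e1 := divz_eq (a - b) n; have e2 := divz_eq (b - a) n.
have hn0 : n != 0 by lia.
have hnp : 0 < n by lia.
have := modz_ge0 (a - b) hn0; have := modz_ge0 (b - a) hn0.
have := ltz_pmod (a - b) hnp; have := ltz_pmod (b - a) hnp.
move: e1 e2 h1 h2.
set x := ((a - b) %% n)%Z; set y := ((b - a) %% n)%Z.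
set q1 := ((a - b) %/ n)%Z; set q2 := ((b - a) %/ n)%Z.
move=> e1 e2 h1 h2 l1 l2 g1 g2.
have [K hK] : exists K, x + y = K * n by exists (- (q1 + q2)); lia.
have := Kn K n hnp.
lia.
Qed.

Lemma lemB (n m a b a' b' : int) : n = 2 * m -> 3 <= m ->
  m - 1 <= ((b - a) %% n)%Z <= m + 1 ->
  m - 1 <= ((b' - a') %% n)%Z <= m + 1 ->
  m - 1 <= ((a' - a) %% n)%Z <= m + 1 ->
  m - 1 <= ((b' - b) %% n)%Z <= m + 1 ->
  (((b' - a') %% n)%Z - m) - (((b - a) %% n)%Z - m) =
  (((b' - b) %% n)%Z - m) - (((a' - a) %% n)%Z - m).
Proof.
move=> hn hm.
have hnp : 0 < n by lia.
have e1 := divz_eq (b - a) n; have e2 := divz_eq (b' - a') n.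
have e3 := divz_eq (a' - a) n; have e4 := divz_eq (b' - b) n.
move: e1 e2 e3 e4.
set x := ((b - a) %% n)%Z; set y := ((b' - a') %% n)%Z.
set u := ((a' - a) %% n)%Z; set v := ((b' - b) %% n)%Z.
set q1 := ((b - a) %/ n)%Z; set q2 := ((b' - a') %/ n)%Z.
set q3 := ((a' - a) %/ n)%Z; set q4 := ((b' - b) %/ n)%Z.
move=> e1 e2 e3 e4 h1 h2 h3 h4.
have [K hK] : exists K, (y - x) - (v - u) = K * n by exists (q1 - q2 - q3 + q4); lia.
have := Kn K n hnp.
lia.
Qed.

Lemma lemC (n m a b a' b' : int) : n = 2 * m -> 3 <= m ->
  1 <= a <= n -> 1 <= b <= n -> 1 <= a' <= n -> 1 <= b' <= n ->
  a != b -> a' != b' ->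
  m - 1 <= ((a' - a) %% n)%Z <= m + 1 ->
  m - 1 <= ((b' - b) %% n)%Z <= m + 1 ->
  `| (((b - a) %% n)%Z - m) - (((b' - a') %% n)%Z - m)| <= 2 \/
  (`| ((b - a) %% n)%Z - m | = m - 1 /\ ((b' - a') %% n)%Z - m = - (((b - a) %% n)%Z - m)).
Proof.
move=> hn hm ha hb ha' hb' hab hab'.
have hn0 : n != 0 by lia.
have hnp : 0 < n by lia.
have e1 := divz_eq (b - a) n; have e2 := divz_eq (b' - a') n.
have e3 := divz_eq (a' - a) n; have e4 := divz_eq (b' - b) n.
have := modz_ge0 (b - a) hn0; have := modz_ge0 (b' - a') hn0.
have := ltz_pmod (b - a) hnp; have := ltz_pmod (b' - a') hnp.
move: e1 e2 e3 e4.
set x := ((b - a) %% n)%Z; set y := ((b' - a') %% n)%Z.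
set u := ((a' - a) %% n)%Z; set v := ((b' - b) %% n)%Z.
set q1 := ((b - a) %/ n)%Z; set q2 := ((b' - a') %/ n)%Z.
set q3 := ((a' - a) %/ n)%Z; set q4 := ((b' - b) %/ n)%Z.
move=> e1 e2 e3 e4 l1 l2 g1 g2 h3 h4.
have hx : x != 0.
  apply/negP => /eqP hx0; rewrite hx0 addr0 in e1.
  have := Kn q1 n hnp; lia.
have hy : y != 0.
  apply/negP => /eqP hx0; rewrite hx0 addr0 in e2.
  have := Kn q2 n hnp; lia.
have [K hK] : exists K, (y - x) - (v - u) = K * n by exists (q1 - q2 - q3 + q4); lia.
have := Kn K n hnp.
lia.
Qed.

Lemma nth_ext (n : nat) (s : seq nat) (j : nat) : (j < n)%N ->
  nth 0 (ext_diff n s) j = resid n (nth 0%N s (j.+1 %% n)) (nth 0%N s j) - (n./2)%:Z.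
Proof. by move=> hj; rewrite /ext_diff (nth_map 0%N) ?size_iota // nth_iota // add0n. Qed.

Lemma bigmin_nat (N k b : nat) (F : nat -> nat) : forall lo,
  (k <= \big[minn/b]_(lo <= i < N) F i)%N -> forall j, (lo <= j < N)%N -> (k <= F j)%N.
Proof.
move=> lo; move Hd: (N - lo)%N => dd; elim: dd lo Hd => [|dd IH] lo Hd h j hj.
  lia.
rewrite big_ltn in h; last by lia.
move: h; rewrite leq_min => /andP[h1 h2].
have [e|ne] := eqVneq j lo; first by rewrite e.
apply: (IH lo.+1) => //; lia.
Qed.

Lemma bigmin_le (N k b : nat) (F : nat -> nat) :
  (k <= \big[minn/b]_(j < N) F j)%N -> forall j, (j < N)%N -> (k <= F j)%N.
Proof.
rewrite -(big_mkord xpredT F) => h j hj; apply: (@bigmin_nat N k b F 0 h); lia.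
Qed.

Lemma distR (n a b : nat) : (6 <= n)%N -> ~~ odd n -> (n./2 - 1 <= dist n a b)%N ->
  (n./2)%:Z - 1 <= resid n b a <= (n./2)%:Z + 1.
Proof.
move=> h6 hodd hd.
have hn : n = (2 * n./2)%N.
  have := odd_double_half n; rewrite (negbTE hodd) add0n -muln2; lia.
move: hd; rewrite /dist leq_min => /andP[h1 h2].
rewrite /resid; apply: lemA.
- lia.
- lia.
- move: h1; rewrite /resid; lia.
- move: h2; rewrite /resid; lia.
Qed.

Theorem mainTheorem16 (n : nat) (d d' : seq int) :
  (6 <= n)%N -> ~~ odd n -> neighbors n d d' -> d != d' ->
  (forall j1 j2 : nat, (1 <= j1)%N -> (j1 <= j2)%N -> (j2 <= n - 1)%N ->
     `| \sum_(j1.-1 <= j < j2) (nth 0 d' j - nth 0 d j) | <= 2) /\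
  (`| nth 0 d (n.-1) - nth 0 d' (n.-1) | <= 2 \/
   (`| nth 0 d (n.-1) | = (n./2 - 1)%N%:Z /\ nth 0 d' (n.-1) = - nth 0 d (n.-1))).
Proof.
move=> h6 hodd [_ [_ [r [r' [hd [hd' [[lr [lr' hcol]] hid]]]]]]] _.
have hn : n = (2 * n./2)%N.
  have := odd_double_half n; rewrite (negbTE hodd) add0n -muln2; lia.
have szr : size r = n by rewrite (perm_size lr) size_iota.
have szr' : size r' = n by rewrite (perm_size lr') size_iota.
have bnd : forall s, latin_row n s -> forall j, (j < n)%N -> (1 <= nth 0%N s j <= n)%N.
  move=> s ls j hj; have : nth 0%N s j \in s by rewrite mem_nth // (perm_size ls) size_iota.
  by rewrite (perm_mem ls) mem_iota; lia.
have dst : forall s, latin_row n s -> forall j, (j < n)%N -> (j.+1 %% n = 0)%N -> nth 0%N s j != nth 0%N s ((j.+1 %% n)%N).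
  move=> s ls j hj hjn; rewrite hjn.
  have us : uniq s by rewrite (perm_uniq ls) iota_uniq.
  rewrite nth_uniq // ?(perm_size ls) ?size_iota //; lia.
have h := leqnn (n./2 - 1); rewrite -{2}hid /rect2_inner_dist !leq_min in h.
move: h => /andP[/andP[hr hr'] hc].
have rowD : forall s, (n./2 - 1 <= row_inner_dist n s)%N ->
    forall j, (j.+1 < n)%N -> (n./2 - 1 <= dist n (nth 0%N s j) (nth 0%N s j.+1))%N.
  move=> s hs j hj; have hj' : (j < n.-1)%N by lia.
  exact: (@bigmin_le _ _ _ (fun j => dist n (nth 0%N s j) (nth 0%N s j.+1)) hs _ hj').
have colD : forall j, (j < n)%N -> (n./2 - 1 <= dist n (nth 0%N r j) (nth 0%N r' j))%N.
  move=> j hj; exact: (@bigmin_le _ _ _ (fun j => dist n (nth 0%N r j) (nth 0%N r' j)) hc _ hj).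
set m : int := (n./2)%:Z.
have hnm : n%:Z = 2 * m by rewrite /m; lia.
have hm3 : 3 <= m by rewrite /m; lia.
set c := fun j => resid n (nth 0%N r' j) (nth 0%N r j) - m.
have crng : forall j, (j < n)%N -> -1 <= c j <= 1.
  move=> j hj; have := @distR n _ _ h6 hodd (colD j hj); rewrite /c -/m; lia.
have hdiff : forall j, (j.+1 < n)%N -> nth 0 d' j - nth 0 d j = c j.+1 - c j.
  move=> j hj; rewrite -hd -hd' !nth_ext; try lia.
  rewrite (modn_small hj) /c -/m /resid.
  apply: lemB => //.
  - by have := @distR n _ _ h6 hodd (rowD r hr j hj).
  - by have := @distR n _ _ h6 hodd (rowD r' hr' j hj).
  - by have := @distR n _ _ h6 hodd (colD j (ltnW hj)).
  - by have := @distR n _ _ h6 hodd (colD j.+1 hj).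
split.
  move=> j1 j2 h1 h12 h2.
  rewrite (eq_big_nat _ _ (F2 := fun j => c j.+1 - c j)); last first.
    move=> i /andP[hi1 hi2]; apply: hdiff; lia.
  rewrite telescope_sumr; last by lia.
  have hj2 : (j2 < n)%N by lia.
  have hj1 : (j1.-1 < n)%N by lia.
  have := crng j2 hj2; have := crng j1.-1 hj1.
  lia.
have hn1 : ((n.-1).+1 %% n = 0)%N by rewrite prednK ?modnn //; lia.
rewrite -hd -hd' !nth_ext; try lia.
rewrite hn1 -/m.
have h0 : (0 < n)%N by lia.
have hn1' : (n.-1 < n)%N by lia.
have := @distR n _ _ h6 hodd (colD 0%N h0); have := @distR n _ _ h6 hodd (colD n.-1 hn1').
have := bnd r lr 0%N h0; have := bnd r lr n.-1 hn1'; have := bnd r' lr' 0%N h0; have := bnd r' lr' n.-1 hn1'.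
have := dst r lr n.-1 hn1' hn1; have := dst r' lr' n.-1 hn1' hn1.
rewrite hn1 /resid => e1 e2 b1 b2 b3 b4 c1 c2.
have := @lemC n m (nth 0%N r n.-1) (nth 0%N r 0) (nth 0%N r' n.-1) (nth 0%N r' 0) hnm hm3.
have hmdef : m = (n./2)%:Z by [].
have a1 : 1 <= (nth 0%N r n.-1)%:Z <= n by move: b3; clear; lia.
have a2 : 1 <= (nth 0%N r 0)%:Z <= n by move: b4; clear; lia.
have a3 : 1 <= (nth 0%N r' n.-1)%:Z <= n by move: b1; clear; lia.
have a4 : 1 <= (nth 0%N r' 0)%:Z <= n by move: b2; clear; lia.
have a5 : (nth 0%N r n.-1)%:Z != (nth 0%N r 0)%:Z by rewrite eqz_nat.
have a6 : (nth 0%N r' n.-1)%:Z != (nth 0%N r' 0)%:Z by rewrite eqz_nat.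
have a7 := c1; have a8 := c2; rewrite -hmdef in a7 a8.
move=> H; have [H1|[H2 H3]] := H a1 a2 a3 a4 a5 a6 a7 a8.
  by left.
right; split=> //; rewrite H2 hmdef; clear -h6 hn; lia.
Qed.
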